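(* Let $p$ be an odd prime, $t,s$ positive integers, $r=p^t$, $q=r^s$, $T=q+1$, let $\eta$ be the quadratic multiplicative character of $\mathbb{F}_r$ (with $\eta(0)=0$), and let $\chi(x)=\zeta_p^{\mathrm{Tr}_{q^2/p}(x)}$ ($\zeta_p=e^{2\pi i/p}$) be the canonical additive character of $\mathbb{F}_{q^2}$. For $a\in\mathbb{F}_{q^2}^*$ let $$Q=\sum_{x\in\mathbb{F}_{q^2}}\chi(ax)\,\eta(\mathrm{Tr}_{q/r}(x^T)).$$ Then $Q=0$ if $\mathrm{Tr}_{q/r}(a^T)=0$, and $Q=-q\,\eta(-\mathrm{Tr}_{q/r}(a^T))$ if $\mathrm{Tr}_{q/r}(a^T)\neq0$.
   Context: $\mathrm{Tr}_{q/r}$ is the trace from $\mathbb{F}_q$ to $\mathbb{F}_r$ and $\mathrm{Tr}_{q^2/p}$ the absolute trace of $\mathbb{F}_{q^2}$; note $x^{q+1}\in\mathbb{F}_q$ for $x\in\mathbb{F}_{q^2}$. *)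

(* Defs.v *)
From mathcomp Require Import all_boot all_algebra all_field.
Set Implicit Arguments. Unset Strict Implicit. Unset Printing Implicit Defensive.
Import GRing.Theory.
Local Open Scope ring_scope.

Definition relTr (L : finFieldType) (r s : nat) (y : L) : L :=
  \sum_(i < s) y ^+ (r ^ i).

Definition absTr (L : finFieldType) (p n : nat) (x : L) : L :=
  \sum_(i < n) x ^+ (p ^ i).

(* Canonical additive character chi(x) = zeta^(Tr(x)), where Tr(x) in F_p is
   identified with the unique k < p with k%:R = Tr(x). *)
Definition addChar (L : finFieldType) (p n : nat) (zeta : algC) (x : L) : algC :=
  if [pick k : 'I_p | (k%:R : L) == absTr p n x] is Some k then zeta ^+ k else 0.

(* Quadratic character eta of the subfield F_r = {z in L | z^r = z},
   with eta(0) = 0; applied to elements y of F_r. *)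
Definition qchar (L : finFieldType) (r : nat) (y : L) : algC :=
  if y == 0 then 0
  else if [exists z : L, (z ^+ r == z) && (z ^+ 2 == y)] then 1 else -1.

(* Main.v *)
Require Import Defs.
From mathcomp Require Import all_boot all_algebra all_field.
From mathcomp Require Import ring zify.
Set Implicit Arguments. Unset Strict Implicit. Unset Printing Implicit Defensive.
Import GRing.Theory Num.Theory.
Local Open Scope ring_scope.

Section Gen.
Variable L : finFieldType.

Lemma card_roots (P : {poly L}) (S : pred L) :
  P != 0 -> (forall z, S z -> root P z) -> (#|S| < size P)%N.
Proof.
move=> P0 HS; rewrite cardE; apply: max_poly_roots => //; last exact: enum_uniq.
by apply/allP => z; rewrite mem_enum => /HS.
Qed.

Lemma tr_poly_nz (m k : nat) : (1 < m)%N -> (0 < k)%N -> #|L| = (m ^ k)%N ->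
  exists x : L, \sum_(i < k) x ^+ (m ^ i) != 0.
Proof.
move=> m1 k0 cL; apply/existsP; rewrite -negb_forall; apply/negP => /forallP H.
pose P : {poly L} := \sum_(i < k) 'X^(m ^ i).
have P0 : P != 0.
  apply/eqP => /(congr1 (fun P : {poly L} => P`_(m ^ k.-1))).
  have hk : (k.-1 < k)%N by rewrite ltn_predL.
  rewrite coef_sum coef0 (bigD1 (Ordinal hk)) //= coefXn eqxx big1 ?addr0.
    by move/eqP; rewrite oner_eq0.
  move=> i /eqP ni; rewrite coefXn eqn_exp2l //.
  by case: eqP => // Ei; case: ni; apply: val_inj.
have sP : (size P <= (m ^ k.-1).+1)%N.
  apply/leq_sizeP => j hj; rewrite coef_sum big1 // => i _; rewrite coefXn.
  have : (m ^ i <= m ^ k.-1)%N by rewrite leq_exp2l // -ltnS prednK.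
  by case: eqP => // E => lei; rewrite E ltnNge lei in hj.
have rt : forall z, predT z -> root P z.
  move=> z _; rewrite /root horner_sum.
  under eq_bigr do rewrite hornerXn.
  exact: H z.

have := card_roots P0 rt; rewrite -/#|L| cL => /leq_trans/(_ sP).
rewrite ltnS leqNgt => /negP; apply; rewrite -{2}(prednK k0) expnS.
by rewrite ltn_Pmull // expn_gt0 (ltn_trans _ m1).
Qed.
End Gen.

Section Char.
Variable L : finFieldType.
Variables (p n : nat) (zeta : algC).
Hypothesis pr_p : prime p.
Hypothesis n0 : (0 < n)%N.
Hypothesis cardL : #|L| = (p ^ n)%N.
Hypothesis zp : p.-primitive_root zeta.

Lemma charL : p \in [pchar L]. Proof. exact: card_finPcharP cardL pr_p. Qed.

Definition pn (e : nat) := [pchar L].-nat e.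

Lemma pn_p k : pn (p ^ k). Proof. by rewrite /pn pnatX pnatE // charL. Qed.
Lemma pnM a b : pn a -> pn b -> pn (a * b). Proof. by rewrite /pn pnatM => -> ->. Qed.
Lemma pnX a k : pn a -> pn (a ^ k). Proof. by rewrite /pn pnatX => ->. Qed.

Lemma frobD e (x y : L) : pn e -> (x + y) ^+ e = x ^+ e + y ^+ e.
Proof. by move=> h; rewrite exprDn_pchar. Qed.
Lemma frobN e (x : L) : pn e -> (- x) ^+ e = - x ^+ e.
Proof. by move=> h; rewrite exprNn_pchar. Qed.
Lemma frobB e (x y : L) : pn e -> (x - y) ^+ e = x ^+ e - y ^+ e.
Proof. by move=> h; rewrite frobD // frobN. Qed.
Lemma frob_sum e (I : finType) (P : pred I) (F : I -> L) : pn e ->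
  (\sum_(i | P i) F i) ^+ e = \sum_(i | P i) F i ^+ e.
Proof.
move=> h; apply: (big_rec2 (fun a b => a ^+ e = b)).
  by rewrite expr0n; case: e h => // /=; rewrite /pn /pnat.
by move=> i a b _ <-; rewrite frobD.
Qed.
Lemma natX_pn e k : pn e -> (k%:R : L) ^+ e = k%:R.
Proof.
move=> h; elim: k => [|k IH]; first by rewrite expr0n; case: e h.
by rewrite -addn1 natrD frobD // IH expr1n.
Qed.

Lemma natr_inj_lt a b : (a < p)%N -> (b < p)%N -> (a%:R : L) = b%:R -> a = b.
Proof.
wlog ab : a b / (a <= b)%N.
  move=> W ha hb E; case: (leqP a b) => [h|h]; first exact: W.
  by apply/esym/W => //; apply: ltnW.
move=> ha hb E; apply/eqP; rewrite eqn_leq ab /=.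
have : ((b - a)%:R : L) == 0 by rewrite natrB // E subrr.
rewrite -(dvdn_pcharf charL) => hd.
case: (posnP (b - a)) => [/eqP|h]; first by rewrite subn_eq0.
have h2 := dvdn_leq h hd; have : (b - a < p)%N by apply: leq_ltn_trans (leq_subr _ _) hb.
by rewrite ltnNge h2.
Qed.

Lemma primefield (z : L) : z ^+ p = z -> exists2 k, (k < p)%N & k%:R = z.
Proof.
move=> hz.
pose S := [pred y : L | y ^+ p == y].
pose I := [set (k%:R : L) | k : 'I_p].
have p1 : (1 < p)%N by apply: prime_gt1.
have cI : #|I| = p.
  rewrite card_imset ?card_ord // => i j /natr_inj_lt E; apply: val_inj; exact: E.
have IS : I \subset S.
  apply/subsetP => y /imsetP [k _ ->]; rewrite inE /=.
  by rewrite -{2}(expn1 p) natX_pn // pn_p.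
have cS : (#|S| < p.+1)%N.
  have sz : size ('X^p - 'X : {poly L}) = p.+1.
    by rewrite size_polyDl ?size_polyXn // size_polyN size_polyX ltnS.
  have P0 : ('X^p - 'X : {poly L}) != 0 by rewrite -size_poly_eq0 sz.
  have := card_roots P0 (S := S); rewrite sz; apply.
  by move=> y; rewrite inE /root !hornerE subr_eq0.
have : S \subset I.
  have := subset_leqif_card IS; case=> _ <-; rewrite eqn_leq cI; apply/andP; split.
    by rewrite -{1}cI; exact: subset_leq_card.
  by rewrite -ltnS.
move/subsetP/(_ z); rewrite inE /= hz eqxx => /(_ isT) /imsetP [k _ ->].
by exists k.
Qed.

Definition Tr (x : L) := absTr p n x.

Lemma Tr_p (x : L) : Tr x ^+ p = Tr x.
Proof.
rewrite /Tr /absTr frob_sum; last by rewrite -(expn1 p) pn_p.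
under eq_bigr do rewrite -exprM -expnSr.
rewrite -(prednK n0) big_ord_recr big_ord_recl /= prednK // -cardL expf_card.
by rewrite addrC; congr (_ + _); apply: eq_bigr => i _; rewrite expnS.
Qed.

Lemma TrD (x y : L) : Tr (x + y) = Tr x + Tr y.
Proof. by rewrite /Tr /absTr -big_split; apply: eq_bigr => i _; rewrite frobD // pn_p. Qed.

Lemma Tr_prime (x : L) : exists2 k, (k < p)%N & k%:R = Tr x.
Proof. exact: primefield (Tr_p x). Qed.

Lemma Tr_pn e (x : L) : pn e -> Tr (x ^+ e) = Tr x.
Proof.
move=> he; have [k kp Ek] := Tr_prime x.
rewrite -Ek -(natX_pn k he) Ek /Tr /absTr frob_sum //.
by apply: eq_bigr => i _; rewrite -!exprM mulnC.
Qed.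

Definition ch (x : L) := addChar p n zeta x.

Lemma chE (x : L) m : m%:R = Tr x -> ch x = zeta ^+ m.
Proof.
move=> hm; rewrite /ch /addChar -/(Tr x).
case: pickP => [k /eqP Hk | H].
  rewrite -(prim_expr_mod zp m); congr (_ ^+ _).
  apply: natr_inj_lt => //; first by rewrite ltn_pmod // prime_gt0.
  by rewrite GRing.natr_mod_pchar ?charL // Hk hm.
have [k kp Ek] := Tr_prime x.
by have := H (Ordinal kp); rewrite /= Ek eqxx.
Qed.

Lemma chD (x y : L) : ch (x + y) = ch x * ch y.
Proof.
have [k _ Ek] := Tr_prime x; have [l _ El] := Tr_prime y.
rewrite (chE Ek) (chE El) (@chE _ (k + l)) ?exprD //.
by rewrite natrD Ek El TrD.
Qed.

Lemma ch0 : ch 0 = 1.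
Proof. by rewrite (@chE _ 0) // /Tr /absTr big1 // => i _; rewrite expr0n expn_eq0 eqn0Ngt prime_gt0. Qed.

Lemma ch_pn e (x : L) : pn e -> ch (x ^+ e) = ch x.
Proof.
move=> he; have [k _ Ek] := Tr_prime x.
by rewrite (chE Ek) (@chE _ k) // Tr_pn.
Qed.

Lemma ch_neq0 (x : L) : ch x != 0.
Proof.
have [k _ Ek] := Tr_prime x; rewrite (chE Ek) expf_neq0 //.
by apply/eqP => z0; have := prim_expr_order zp; rewrite z0 expr0n gtn_eqF ?prime_gt0 // => /eqP; rewrite eq_sym oner_eq0.
Qed.

Lemma chN (x : L) : ch (- x) = (ch x)^-1.
Proof.
apply: (mulIf (ch_neq0 x)); rewrite -chD addNr ch0 mulVf //; exact: ch_neq0.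
Qed.

Lemma chB (x y : L) : ch (x - y) = ch x / ch y.
Proof. by rewrite chD chN. Qed.

Lemma ch_sum (I : finType) (P : pred I) (F : I -> L) :
  ch (\sum_(i | P i) F i) = \prod_(i | P i) ch (F i).
Proof.
apply: (big_rec2 (fun a b => ch a = b)); first exact: ch0.
by move=> i a b _ <-; rewrite chD.
Qed.

Lemma ch_nontriv : exists x : L, ch x != 1.
Proof.
have [x hx] := tr_poly_nz (prime_gt1 pr_p) n0 cardL.
exists x; have [k kp Ek] := Tr_prime x; rewrite (chE Ek) -(prim_order_dvd zp).
apply/negP => hd; case: (posnP k) => [k0|k0].
  by move: hx; rewrite -/(absTr p n x) -/(Tr x) -Ek k0 eqxx.
by have := dvdn_leq k0 hd; rewrite leqNgt kp.
Qed.

Lemma sum_char0 (S : pred L) (phi : L -> algC) d :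
  (forall x y, phi (x + y) = phi x * phi y) ->
  (forall x, S (x + d) = S x) -> phi d != 1 ->
  \sum_(x | S x) phi x = 0.
Proof.
move=> hphi hS hd.
have E : \sum_(x | S x) phi x = (\sum_(x | S x) phi x) * phi d.
  rewrite {1}(reindex_inj (addIr d)) /= mulr_suml.
  apply: eq_big => [x|x _]; first by rewrite hS.
  by rewrite hphi.
apply/eqP; move: E => /eqP; rewrite -subr_eq0 -{1}(mulr1 (\sum_(x | S x) phi x)) -mulrBr.
by rewrite mulf_eq0 subr_eq0 [1 == _]eq_sym (negbTE hd) orbF.
Qed.


Variables t s : nat.
Hypotheses (t0 : (0 < t)%N) (s0 : (0 < s)%N) (hn : n = (2 * (t * s))%N) (p_odd : odd p).

Definition r := (p ^ t)%N.
Definition q := (r ^ s)%N.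

Lemma pn_ri i : pn (r ^ i). Proof. by rewrite /r -expnM pn_p. Qed.
Lemma pn_r : pn r. Proof. by rewrite -(expn1 r) pn_ri. Qed.
Lemma pn_q : pn q. Proof. exact: pn_ri. Qed.

Lemma qq : (q * q)%N = #|L|.
Proof. by rewrite cardL hn /q /r -!expnM -expnD addnn -mul2n. Qed.

Lemma r_gt1 : (1 < r)%N.
Proof. by rewrite /r -(expn0 p) ltn_exp2l // prime_gt1. Qed.

Lemma q_gt2 : (2 < q)%N.
Proof.
have p3 : (2 < p)%N.
  by case: p pr_p p_odd => [|[|[|]]] //.
apply: (leq_trans p3); rewrite /q /r -expnM -{1}(expn1 p) leq_exp2l ?prime_gt1 //.
by rewrite muln_gt0 t0 s0.
Qed.

Lemma xqq (x : L) : (x ^+ q) ^+ q = x.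
Proof. by rewrite -exprM qq expf_card. Qed.

Lemma fixD e (x y : L) : pn e -> x ^+ e = x -> y ^+ e = y -> (x + y) ^+ e = x + y.
Proof. by move=> he hx hy; rewrite frobD // hx hy. Qed.
Lemma fixN e (x : L) : pn e -> x ^+ e = x -> (- x) ^+ e = - x.
Proof. by move=> he hx; rewrite frobN // hx. Qed.
Lemma fixM e (x y : L) : x ^+ e = x -> y ^+ e = y -> (x * y) ^+ e = x * y.
Proof. by move=> hx hy; rewrite exprMn hx hy. Qed.
Lemma fixV e (x : L) : x ^+ e = x -> (x^-1) ^+ e = x^-1.
Proof. by move=> hx; rewrite exprVn hx. Qed.

Lemma W_ri (z : L) i : z ^+ r = z -> z ^+ (r ^ i) = z.
Proof. by move=> hz; elim: i => [|i IH]; rewrite ?expr1 // expnSr exprM IH. Qed.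
Lemma W_q (z : L) : z ^+ r = z -> z ^+ q = z.
Proof. exact: W_ri. Qed.

Lemma two_neq0 : (2%:R : L) != 0.
Proof.
rewrite -(dvdn_pcharf charL); apply/negP => /dvdn_leq.
move=> h; have : (2 < p)%N by move: pr_p p_odd; case: p => [|[|[|]]]. 
by rewrite ltnNge h.
Qed.

Definition trq (y : L) := relTr r s y.

Lemma trq_r (y : L) : trq y ^+ r = \sum_(i < s) y ^+ (r ^ i.+1).
Proof.
rewrite /trq /relTr frob_sum ?pn_r //.
by apply: eq_bigr => i _; rewrite -exprM expnSr.
Qed.

Lemma trq_W (y : L) : y ^+ q = y -> trq y ^+ r = trq y.
Proof.
move=> hy; rewrite trq_r /trq /relTr -(prednK s0) big_ord_recr big_ord_recl /=.
rewrite prednK // -/q hy addrC; congr (_ + _).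
Qed.

Lemma trqZ (c y : L) : c ^+ r = c -> trq (c * y) = c * trq y.
Proof.
move=> hc; rewrite /trq /relTr mulr_sumr; apply: eq_bigr => i _.
by rewrite exprMn (W_ri _ hc).
Qed.

Lemma theta_ex : exists2 th : L, th ^+ q = th & trq th = 1.
Proof.
have [x0 hx0] := tr_poly_nz r_gt1 (ltn_addr s s0) (esym (etrans (expnD r s s) qq)).
pose th0 := x0 + x0 ^+ q.
have hth0 : th0 ^+ q = th0 by rewrite /th0 frobD ?pn_q // xqq addrC.
have Etr : trq th0 = \sum_(i < s + s) x0 ^+ (r ^ i).
  rewrite big_split_ord /= /trq /relTr /th0 -big_split /=.
  apply: eq_bigr => i _; rewrite frobD ?pn_ri //; congr (_ + _).
  by rewrite -exprM expnD.
have k0 : trq th0 != 0 by rewrite Etr.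
have kW : trq th0 ^+ r = trq th0 by apply: trq_W.
exists (th0 * (trq th0)^-1).
  by rewrite fixM // fixV // W_q.
by rewrite mulrC trqZ ?fixV // mulVf.
Qed.


Lemma transfer (th : L) (hthq : th ^+ q = th) (htr : trq th = 1) (c y : L) :
  c ^+ r = c -> y ^+ q = y -> ch (th * (c * trq y)) = ch (c * y).
Proof.
move=> hc hy; rewrite /trq /relTr !mulr_sumr ch_sum (reindex_inj rev_ord_inj) /=.
have E : forall i : 'I_s, ch (th * (c * y ^+ (r ^ (rev_ord i))))
                          = ch (th ^+ (r ^ i.+1) * (c * y)).
  move=> i; rewrite -(ch_pn _ (pn_ri i.+1)); congr ch.
  rewrite !exprMn (W_ri _ hc) -exprM -expnD /= subnK ?ltn_ord //.
by rewrite -/q hy.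
under eq_bigr do rewrite E.
by rewrite -ch_sum -mulr_suml -trq_r htr expr1n mul1r.
Qed.

Lemma two_q : (2%:R : L) ^+ q = 2%:R.
Proof. exact: natX_pn pn_q. Qed.

Lemma ch_halfq (x : L) : ch (2%:R^-1 * (x + x ^+ q)) = ch x.
Proof.
rewrite mulrDr -[in X in _ + X](fixV two_q) -exprMn chD ch_pn ?pn_q // -chD.
congr ch; have h2 := two_neq0; field.
by rewrite h2.
Qed.

Lemma N_Fq (x : L) : (x ^+ q.+1) ^+ q = x ^+ q.+1.
Proof. by rewrite exprS exprMn xqq mulrC. Qed.

Lemma fiber_le (z : L) : (#|[pred y : L | y ^+ q.+1 == z]| <= q.+1)%N.
Proof.
have sz : size ('X^(q.+1) - z%:P : {poly L}) = q.+2 by rewrite size_XnsubC.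
have P0 : ('X^(q.+1) - z%:P : {poly L}) != 0 by rewrite -size_poly_eq0 sz.
have := card_roots P0 (S := [pred y : L | y ^+ q.+1 == z]); rewrite sz; apply.
by move=> y; rewrite inE /root !hornerE subr_eq0.
Qed.

Lemma q_gt0 : (0 < q)%N. Proof. by have := q_gt2; lia. Qed.

Lemma Fqs_le : (#|[pred z : L | (z ^+ q == z) && (z != 0%R)]| <= q.-1)%N.
Proof.
have q1 : (0 < q.-1)%N by have := q_gt2; lia.
have sz : size ('X^(q.-1) - 1 : {poly L}) = q by rewrite size_Xn_sub_1 // prednK // q_gt0.
have P0 : ('X^(q.-1) - 1 : {poly L}) != 0 by rewrite -size_poly_eq0 sz -lt0n q_gt0.
have := card_roots P0 (S := [pred z : L | (z ^+ q == z) && (z != 0)]).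
rewrite sz => h; rewrite -ltnS prednK ?q_gt0 //; apply: h.
move=> z /andP [/eqP hz z0]; rewrite /root !hornerE subr_eq0.
apply/eqP; apply: (mulIf z0); rewrite mul1r -exprSr prednK //.
exact: q_gt0.
Qed.

Lemma fiber_card (z : L) : z ^+ q = z -> z != 0 ->
  #|[pred y : L | y ^+ q.+1 == z]| = q.+1.
Proof.
pose F := [pred z : L | (z ^+ q == z) && (z != 0)].
pose cnt (z : L) := #|[pred y : L | y ^+ q.+1 == z]|.
have tot : (\sum_(z | F z) cnt z = (q * q).-1)%N.
  rewrite qq -(cardC1 (0 : L)) -sum1_card [RHS](partition_big (fun y => y ^+ q.+1) F) /=.
    apply: eq_bigr => w /andP [_ w0]; rewrite /cnt -sum1_card; apply: eq_bigl => y.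
    rewrite !inE; case: (boolP (y ^+ q.+1 == w)) => [/eqP hy|]; rewrite ?andbT ?andbF //.
    by apply/esym/eqP => y0; move: w0; rewrite -hy y0 expr0n eqxx.
  move=> y; rewrite !inE => y0; rewrite N_Fq eqxx /=.
  by rewrite expf_neq0.
have eq0 : (\sum_(z | F z) (q.+1 - cnt z) == 0)%N.
  rewrite sumnB; last by move=> *; exact: fiber_le.
  rewrite tot sum_nat_const subn_eq0.
  have := Fqs_le; rewrite -/F => h.
  apply: (leq_trans (leq_mul h (leqnn q.+1))).
  have := q_gt2; nia.
move=> hz z0; apply/eqP; rewrite eqn_leq fiber_le /=.
move: eq0; rewrite sum_nat_eq0 => /forallP/(_ z)/implyP.
by rewrite inE hz eqxx z0 => /(_ isT); rewrite subn_eq0.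
Qed.


Lemma Fq_sum (c : L) : c ^+ q = c -> c != 0 ->
  \sum_(z | z ^+ q == z) ch (c * z) = 0.
Proof.
move=> hc c0; have [x0 hx0] := ch_nontriv.
have h2 := two_neq0.
pose d := (2%:R * c)^-1 * (x0 + x0 ^+ q).
have hd : d ^+ q = d.
  rewrite /d fixM // ?fixV ?fixM ?two_q //.
  by rewrite frobD ?pn_q // xqq addrC.
apply: (sum_char0 (d := d)).
- by move=> x y; rewrite mulrDr chD.
- by move=> z; rewrite frobD ?pn_q // hd (inj_eq (addIr d)).
have -> : c * d = 2%:R^-1 * (x0 + x0 ^+ q).
  by rewrite /d; field; rewrite h2 c0.
by rewrite ch_halfq.
Qed.

Lemma Gsum (c : L) : c ^+ q = c -> c != 0 ->
  \sum_(y : L) ch (c * y ^+ q.+1) = - (q%:R).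
Proof.
move=> hc c0.
rewrite (partition_big (fun y => y ^+ q.+1) (fun z => z ^+ q == z)); last first.
  by move=> y _; rewrite N_Fq.
have inner : forall z, \sum_(y | true && (y ^+ q.+1 == z)) ch (c * y ^+ q.+1)
                      = ch (c * z) *+ #|[pred y : L | y ^+ q.+1 == z]|.
  move=> z; rewrite -sumr_const; apply: eq_big => y; first by rewrite inE.
  by move/eqP ->.
under eq_bigr do rewrite inner.
rewrite (bigD1 0) /=; last by rewrite expr0n gtn_eqF ?q_gt0.
rewrite mulr0 ch0.
have c0' : #|[pred y : L | y ^+ q.+1 == 0]| = 1%N.
  rewrite -(card1 (0 : L)); apply: eq_card => y; rewrite !inE expf_eq0 /=.
  done.
rewrite c0'.
rewrite (eq_bigr (fun z => ch (c * z) *+ q.+1)); last first.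
  by move=> z /andP [/eqP hz z0]; rewrite fiber_card.
rewrite sumrMnl.
have : \sum_(z | (z ^+ q == z) && (z != 0)) ch (c * z) = -1.
  have := Fq_sum hc c0; rewrite (bigD1 0) /=; last by rewrite expr0n gtn_eqF ?q_gt0.
  rewrite mulr0 ch0.
  by move/eqP; rewrite addrC addr_eq0 => /eqP.
move=> ->; rewrite mulNrn mulrS. ring.
Qed.


Lemma herm_id (a c y A Y : L) : c != 0 ->
  a * (y - A / (2%:R * c)) + c * ((y - A / (2%:R * c)) * (Y - a / (2%:R * c)))
  = c * (y * Y) + (2%:R^-1 * (a * y) - 2%:R^-1 * (A * Y))
    + - (2%:R * (2%:R * c))^-1 * (a * A).
Proof. by move=> c0; have h2 := two_neq0; field; rewrite h2 c0. Qed.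

Lemma Tsum (a c : L) : c ^+ r = c -> c != 0 ->
  \sum_(x : L) ch (a * x) * ch (c * x ^+ q.+1)
  = - (q%:R) * ch (- (2%:R * (2%:R * c))^-1 * a ^+ q.+1).
Proof.
move=> hcr c0; have hc := W_q hcr; have h2 := two_neq0.
pose u := (a / (2%:R * c)) ^+ q.
have hu : u = a ^+ q / (2%:R * c) by rewrite /u exprMn fixV ?fixM ?two_q.
have huq : u ^+ q = a / (2%:R * c) by rewrite /u xqq.
rewrite (reindex_inj (addIr (- u))) /=.
have E : forall y, ch (a * (y - u)) * ch (c * (y - u) ^+ q.+1)
   = ch (c * y ^+ q.+1) * ch (- (2%:R * (2%:R * c))^-1 * a ^+ q.+1).
  move=> y; rewrite -chD exprS frobB ?pn_q // huq hu herm_id //.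
  have -> : 2%:R^-1 * (a ^+ q * y ^+ q) = (2%:R^-1 * (a * y)) ^+ q.
    by rewrite !exprMn fixV ?two_q.
  rewrite !chD chN ch_pn ?pn_q // divff ?ch_neq0 // mulr1.
  by rewrite -exprS (exprS a).
under eq_bigr do rewrite E.
by rewrite -mulr_suml Gsum // mulrC.
Qed.


Definition Wp := [pred z : L | z ^+ r == z].
Definition sqC (v : L) : algC := \sum_(w | w ^+ r == w) ((w ^+ 2 == v)%:R).

Lemma r_gt0 : (0 < r)%N. Proof. exact: ltn_trans r_gt1. Qed.

Lemma eta_sq (v : L) : v ^+ r = v -> qchar r v = sqC v - 1.
Proof.
move=> hv; rewrite /qchar /sqC; case: eqP => [-> | /eqP v0].
  rewrite (bigD1 0) /=; last by rewrite expr0n gtn_eqF ?r_gt0.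
  rewrite big1 => [|w /andP [_ w0]]; last by rewrite sqrf_eq0 (negbTE w0).
  by rewrite expr0n /= eqxx addr0 subrr.
case: existsP => [[z /andP [/eqP zr /eqP zv]] | nz].
  have z0 : z != 0 by apply: contraNneq v0 => z0; rewrite -zv z0 expr0n.
  have h2 := two_neq0.
  have nzz : - z != z.
    apply/eqP => /eqP; rewrite -subr_eq0 -opprD oppr_eq0 -mulr2n -mulr_natl mulf_eq0.
    by rewrite (negbTE h2) (negbTE z0).
  rewrite (bigD1 z) /=; last by rewrite zr eqxx.
  rewrite (bigD1 (- z)) /=; last by rewrite (fixN pn_r zr) eqxx nzz.
  rewrite zv eqxx sqrrN zv eqxx big1 => [|w /andP [/andP [_ wz] wmz]].
    by rewrite addr0 addrK.
  by rewrite -zv eqf_sqr (negbTE wz) (negbTE wmz).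
rewrite big1 ?sub0r // => w /eqP wr.
case: eqP => // wv; case: nz; exists w; by rewrite wr wv !eqxx.
Qed.


Lemma half_r : (2%:R^-1 : L) ^+ r = 2%:R^-1.
Proof. by rewrite fixV // natX_pn // pn_r. Qed.

Lemma deltaW (th : L) (hthq : th ^+ q = th) (htr : trq th = 1) (m : L) :
  m ^+ r = m ->
  \sum_(c | c ^+ r == c) ch (th * (c * m)) = (#|Wp|%:R : algC) * (m == 0)%:R.
Proof.
move=> hm; case: (eqVneq m 0) => [-> | m0].
  rewrite mulr1 (eq_bigr (fun _ => 1)) => [|c _]; last by rewrite !mulr0 ch0.
  rewrite -sumr_const; apply: eq_bigl => c; by rewrite inE.
rewrite mulr0.
have [x0 hx0] := ch_nontriv.
pose y0 := x0 + x0 ^+ q.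
have hy0 : y0 ^+ q = y0 by rewrite /y0 frobD ?pn_q // xqq addrC.
pose v0 := 2%:R^-1 * trq y0.
have hv0 : v0 ^+ r = v0 by rewrite /v0 fixM ?half_r ?trq_W.
pose d := v0 / m.
have hd : d ^+ r = d by rewrite /d fixM ?fixV.
apply: (sum_char0 (d := d)).
- by move=> x y; rewrite mulrDl mulrDr chD.
- by move=> c; rewrite frobD ?pn_r // hd (inj_eq (addIr d)).
rewrite /d mulfVK // /v0 transfer ?half_r //.
by rewrite ch_halfq.
Qed.

Lemma sum_ch_a (a : L) : a != 0 -> \sum_(x : L) ch (a * x) = 0.
Proof.
move=> a0; have [x0 hx0] := ch_nontriv.
apply: (sum_char0 (d := x0 / a)) => //.
- by move=> x y; rewrite mulrDr chD.
by rewrite mulrC mulfVK.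
Qed.

Definition K (d : L) := - (2%:R * (2%:R * d))^-1.

Lemma KK d : K (K d) = d.
Proof.
rewrite /K; case: (eqVneq d 0) => [->|d0]; first by rewrite !mulr0 invr0 oppr0 !mulr0 invr0 oppr0.
have h2 := two_neq0; field; by rewrite h2 d0 oppr_eq0 oner_eq0.
Qed.

Lemma K_r d : d ^+ r = d -> K d ^+ r = K d.
Proof.
move=> hd; rewrite /K fixN ?pn_r // fixV // fixM ?fixM // natX_pn // pn_r //.
Qed.

Lemma K_eq0 d : (K d == 0) = (d == 0).
Proof.
rewrite /K oppr_eq0 invr_eq0 !mulf_eq0.
by rewrite (negbTE two_neq0).
Qed.


Lemma main_formula (a : L) : a != 0 ->
  \sum_(x : L) ch (a * x) * qchar r (trq (x ^+ q.+1))
  = - (q%:R) * qchar r (- trq (a ^+ q.+1)).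
Proof.
move=> a0; have [th hthq htr] := theta_ex.
set b := trq (a ^+ q.+1).
have hb : b ^+ r = b by apply: trq_W; exact: N_Fq.
set Wn : algC := #|Wp|%:R.
have sumW1 : \sum_(u : L | u ^+ r == u) (1 : algC) = Wn.
  by rewrite /Wn -sumr_const; apply: eq_bigl => c; rewrite inE.
have Wn0 : Wn != 0.
  rewrite pnatr_eq0 -lt0n; apply/card_gt0P; exists 0.
  by rewrite inE expr0n gtn_eqF ?r_gt0.
apply: (mulfI Wn0).
have P1 : forall x, Wn * qchar r (trq (x ^+ q.+1)) =
   \sum_(w | w ^+ r == w) \sum_(c | c ^+ r == c)
      ch (c * x ^+ q.+1) * ch (th * - (c * w ^+ 2)) - Wn.
  move=> x; set f := trq (x ^+ q.+1).
  have hf : f ^+ r = f by apply: trq_W; exact: N_Fq.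
  rewrite eta_sq // mulrBr mulr1 /sqC mulr_sumr; congr (_ - _).
  apply: eq_bigr => w /eqP hw.
  have hm : (f - w ^+ 2) ^+ r = f - w ^+ 2.
    by rewrite frobB ?pn_r // hf -exprM mulnC exprM hw.
  rewrite (_ : (w ^+ 2 == f) = (f - w ^+ 2 == 0)); last by rewrite subr_eq0 eq_sym.
  rewrite -(deltaW hthq htr hm); apply: eq_bigr => c /eqP hc.
  rewrite mulrBr mulrDr chD; congr (_ * _).
  exact: transfer (N_Fq x).
rewrite mulr_sumr.
under eq_bigr do rewrite mulrCA P1 mulrBr.
rewrite sumrB -mulr_suml sum_ch_a // mul0r subr0.
have P2 : \sum_(x : L) ch (a * x) * \sum_(w | w ^+ r == w) \sum_(c | c ^+ r == c)
      ch (c * x ^+ q.+1) * ch (th * - (c * w ^+ 2))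
   = \sum_(w : L | w ^+ r == w) \sum_(c : L | c ^+ r == c) ch (th * - (c * w ^+ 2))
      * \sum_(x : L) ch (a * x) * ch (c * x ^+ q.+1).
  transitivity (\sum_(x : L) \sum_(w : L | w ^+ r == w) \sum_(c : L | c ^+ r == c)
      ch (a * x) * (ch (c * x ^+ q.+1) * ch (th * - (c * w ^+ 2)))).
    by apply: eq_bigr => x _; rewrite mulr_sumr; apply: eq_bigr => w _; rewrite mulr_sumr.
  rewrite exchange_big; apply: eq_bigr => w _; rewrite exchange_big.
  apply: eq_bigr => c _; rewrite mulr_sumr; apply: eq_bigr => x _.
  by rewrite mulrA mulrC.
rewrite P2.
have P3 : forall w, \sum_(c : L | c ^+ r == c) ch (th * - (c * w ^+ 2))
      * \sum_(x : L) ch (a * x) * ch (c * x ^+ q.+1)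
   = - (q%:R) * \sum_(c : L | (c ^+ r == c) && (c != 0)) ch (th * (- (c * w ^+ 2) + K c * b)).
  move=> w; rewrite (bigD1 0) /=; last by rewrite expr0n gtn_eqF ?r_gt0.
  rewrite (eq_bigr (fun x => ch (a * x))) => [|x _]; last by rewrite mul0r ch0 mulr1.
  rewrite sum_ch_a // mulr0 add0r mulr_sumr; apply: eq_bigr => c /andP [/eqP hc c0].
  rewrite Tsum // -/(K c) -(transfer hthq htr (K_r hc) (N_Fq a)) -/b.
  by rewrite mulrCA -chD mulrDr.
under eq_bigr do rewrite P3.
rewrite -mulr_sumr mulrCA; congr (_ * _).
have h2 := two_neq0.
rewrite eta_sq ?(fixN pn_r hb) // exchange_big /=.
transitivity (\sum_(c : L | (c ^+ r == c) && (c != 0)) \sum_(u : L | u ^+ r == u)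
                ch (th * (K c * (u ^+ 2 + b)))).
  apply: eq_bigr => c /andP [/eqP hc c0].
  have c2 : (2%:R * c)^-1 != 0 by rewrite invr_eq0 mulf_neq0.
  have c2r : ((2%:R * c)^-1) ^+ r = (2%:R * c)^-1.
    by rewrite fixV // fixM // natX_pn // pn_r.
  rewrite (reindex_inj (mulIf c2)) /=.
  apply: eq_big => [u|u _]; first by rewrite exprMn c2r (inj_eq (mulIf c2)).
  by congr ch; congr (_ * _); rewrite /K; field; rewrite h2 c0.
rewrite exchange_big /=.
transitivity (\sum_(u : L | u ^+ r == u) (Wn * (u ^+ 2 + b == 0)%:R - 1)).
  apply: eq_bigr => u /eqP hu.
  have hm : (u ^+ 2 + b) ^+ r = u ^+ 2 + b.
    by rewrite frobD ?pn_r // hb -exprM mulnC exprM hu.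
  rewrite (reindex_inj (can_inj KK)) /=.
  transitivity (\sum_(d : L | (d ^+ r == d) && (d != 0)) ch (th * (d * (u ^+ 2 + b)))).
    apply: eq_big => [d|d _]; last by rewrite KK.
    rewrite K_eq0; congr (_ && _); apply/eqP/eqP => h; last exact: K_r.
    by rewrite -(KK d); apply: K_r.
  rewrite -(deltaW hthq htr hm) [in RHS](bigD1 0) /=; last by rewrite expr0n gtn_eqF ?r_gt0.
  by rewrite mul0r mulr0 ch0 addrC addrK.
rewrite sumrB sumW1 /sqC mulrBr mulr1 mulr_sumr; congr (_ - _).
by apply: eq_bigr => u _; rewrite addr_eq0.
Qed.

End Char.

Theorem mainTheorem11 (p t s : nat) (L : finFieldType) (zeta : algC) (a : L) :
  prime p -> odd p -> (0 < t)%N -> (0 < s)%N ->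
  #|L| = (((p ^ t) ^ s) ^ 2)%N ->
  p.-primitive_root zeta ->
  a != 0 ->
  let r := (p ^ t)%N in
  let q := (r ^ s)%N in
  let T := q.+1 in
  let Q := \sum_(x : L) addChar p (2 * (t * s)) zeta (a * x)
                        * qchar r (relTr r s (x ^+ T)) in
  (relTr r s (a ^+ T) = 0 -> Q = 0) /\
  (relTr r s (a ^+ T) != 0 -> Q = - (q%:R) * qchar r (- relTr r s (a ^+ T))).
Proof.
move=> pr_p p_odd t0 s0 cardL zp a0 r0 q0 T Q.
have n0 : (0 < 2 * (t * s))%N by rewrite !muln_gt0 t0 s0.
have cL : #|L| = (p ^ (2 * (t * s)))%N.
  by rewrite cardL -!expnM mulnA mulnC.
have EQ : Q = - (q0%:R) * qchar r0 (- relTr r0 s (a ^+ T)).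
  have E := main_formula pr_p n0 cL zp t0 s0 (erefl _) p_odd a0.
  rewrite /ch /trq /q /r in E.
  by rewrite /Q /T /q0 /r0 E.
split => [hb|hb]; last exact: EQ.
by rewrite EQ hb oppr0 /qchar eqxx mulr0.
Qed.
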